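(* Suppose that $R$ is a regular local ring dominated by $S$ and $(u,v)$ are regular parameters of $R$ such that $u=x^t$ and $v=y$, where $t$ is a positive integer. If $t\mid d_k$ for some $k>0$, then $\{u,\{T_i\}_{i=1}^{k+1}\}=\{T'_i\}_{i=0}^{k+1}$ is the beginning of a sequence of jumping polynomials in $R$ (with respect to $(u,v)$). Moreover, for all $1\le i\le k$ the pair of coprime integers defined in the construction of the jumping polynomials $\{T'_i\}_{i\ge0}$ in $R$ is $(p'_i,q'_i)=\left(\frac{p_i}{t},q_i\right)$.
   Context: Setting: $k$ (the base field) is algebraically closed of characteristic $0$; $K^*/K$ is a finite extension of function fields of transcendence degree $2$ over $k$; $\nu^*$ is a $k$-valuation of $K^*$ with valuation ring $V^*$, value group a subgroup of $\mathbb{Q}$ and residue field $V^*/m_{V^*}=k$; $\nu$ is its restriction to $K$. $S$ is an algebraic two-dimensional regular local ring with quotient field $K^*$ dominated by $V^*$, with regular parameters $(x,y)$; $\nu^*$ is normalized so that $\nu^*(x)=1$; $R$ is an algebraic regular local ring with quotient field $K$. Jumping polynomials of a ring $A$ with regular parameters $(a_0,a_1)$, with respect to the valuation $\mu=\nu^*/\nu^*(a_0)$ (so $\mu(a_0)=1$): $T_0=a_0$, $T_1=a_1$, $q_0=\infty$, $p_1,q_1$ coprime positive integers with $\mu(a_1)=p_1/q_1$; for $i\ge1$, $n_{i,j}$ ($0\le j<i$) are nonnegative integers with $n_{i,j}<q_j$ and $q_i\mu(T_i)=\sum_{j<i}n_{i,j}\mu(T_j)$, $\lambda_i\in k$ is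 the residue of $T_i^{q_i}/\prod_{j<i}T_j^{n_{i,j}}$, $T_{i+1}=T_i^{q_i}-\lambda_i\prod_{j<i}T_j^{n_{i,j}}$, and $p_{i+1},q_{i+1}$ are coprime positive integers with $\mu(T_{i+1})=q_i\mu(T_i)+\frac{1}{q_1\cdots q_i}\frac{p_{i+1}}{q_{i+1}}$. Here $\{T_i\}$, $p_i$, $q_i$ denote the jumping polynomials and integers of $S$ with respect to $(x,y)$, $\{T'_i\}$, $p'_i,q'_i$ those of $R$ with respect to $(u,v)$, and $d_k=\gcd(p_1,\dots,p_k)$. *)

(* Defs.v *)
From HB Require Import structures.
From mathcomp Require Import all_boot all_order all_algebra.
Set Implicit Arguments. Unset Strict Implicit. Unset Printing Implicit Defensive.
Import Order.TTheory GRing.Theory Num.Theory.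
Local Open Scope ring_scope.

(* A k-valuation on the field L (containing k via iota) with values in Q and
   residue field k.  The value [nu 0] (= +oo in the paper) is irrelevant:
   all axioms only concern nonzero elements. *)
Definition kvaluation (k : fieldType) (L : fieldType) (iota : {rmorphism k -> L})
    (nu : L -> rat) : Prop :=
  [/\ (forall a b : L, a != 0 -> b != 0 -> nu (a * b) = nu a + nu b),
      (forall a b : L, a != 0 -> b != 0 -> a + b != 0 ->
          Num.min (nu a) (nu b) <= nu (a + b)),
      (forall c : k, c != 0 -> nu (iota c) = 0) &
      (* residue field V/m_V = k *)
      (forall f : L, f != 0 -> nu f = 0 ->
          exists c : k, f - iota c = 0 \/ 0 < nu (f - iota c))].

Definition is_residue (k L : fieldType) (iota : {rmorphism k -> L})
    (nu : L -> rat) (f : L) (c : k) : Prop :=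
  f - iota c = 0 \/ 0 < nu (f - iota c).

(* A (sub)ring A of L containing k, a local ring dominated by the valuation
   ring V of nu (so m_A = m_V \cap A), whose maximal ideal is generated by
   the two elements a0, a1 of m_A ("regular parameters"). *)
Definition local_dominated_params (k L : fieldType) (iota : {rmorphism k -> L})
    (nu : L -> rat) (A : {pred L}) (a0 a1 : L) : Prop :=
  [/\ [/\ 1 \in A, (forall a b, a \in A -> b \in A -> a + b \in A),
          (forall a b, a \in A -> b \in A -> a * b \in A),
          (forall a, a \in A -> - a \in A) &
          (forall c : k, iota c \in A)],
      (forall a, a \in A -> a != 0 -> 0 <= nu a),
      (forall a, a \in A -> a != 0 -> nu a = 0 -> a^-1 \in A),
      [/\ a0 \in A, a1 \in A, a0 != 0 & a1 != 0] /\ (0 < nu a0 /\ 0 < nu a1) &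
      (forall a, a \in A -> (a = 0 \/ 0 < nu a) ->
          exists r s, [/\ r \in A, s \in A & a = r * a0 + s * a1])].

Definition nmu (L : fieldType) (nu : L -> rat) (a0 : L) (f : L) : rat :=
  nu f / nu a0.

(* [jumping_upto iota nu a0 a1 T p q n lam m] : T_0, ..., T_m are the first
   jumping polynomials of a ring with regular parameters (a0,a1) w.r.t.
   mu = nu/nu(a0), with the integers p_i, q_i (1 <= i < m), n_{i,j}
   (1 <= i < m, j < i) and residues lam_i (1 <= i < m) of the construction.
   (T_m is defined as T_{m-1}^{q_{m-1}} - lam_{m-1} prod ..., while the pair
   (p_m, q_m) is not part of the data.) *)
Definition jumping_upto (k L : fieldType) (iota : {rmorphism k -> L})
    (nu : L -> rat) (a0 a1 : L) (T : nat -> L) (p q : nat -> nat)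
    (n : nat -> nat -> nat) (lam : nat -> k) (m : nat) : Prop :=
  let mu := nmu nu a0 in
  [/\ T 0%N = a0, T 1%N = a1 &
      (forall i, (i < m)%N -> T i != 0)] /\
  [/\
      (forall i, (1 <= i < m)%N -> [/\ (0 < p i)%N, (0 < q i)%N & coprime (p i) (q i)]),
      ((1 < m)%N -> mu (T 1%N) = (p 1%N)%:R / (q 1%N)%:R),
      (forall i, (1 <= i < m)%N ->
         [/\ (forall j, (1 <= j < i)%N -> (n i j < q j)%N),
             (q i)%:R * mu (T i) = \sum_(j < i) (n i j)%:R * mu (T j),
             is_residue iota nu (T i ^+ q i / \prod_(j < i) T j ^+ n i j) (lam i) &
             T i.+1 = T i ^+ q i - iota (lam i) * \prod_(j < i) T j ^+ n i j]) &
      (forall i, (1 <= i)%N -> (i.+1 < m)%N ->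
         mu (T i.+1) = (q i)%:R * mu (T i)
            + (\prod_(1 <= j < i.+1) (q j)%:R)^-1 * ((p i.+1)%:R / (q i.+1)%:R))].

Definition dgcd (p : nat -> nat) (kk : nat) : nat :=
  \big[gcdn/0%N]_(1 <= i < kk.+1) p i.

(* Main.v *)
Require Import Defs.
From HB Require Import structures.
From mathcomp Require Import all_boot all_order all_algebra.
From mathcomp Require Import ring lra zify.
Import Order.TTheory GRing.Theory Num.Theory.
Local Open Scope ring_scope.

Lemma dgcd_dvd (p : nat -> nat) kk i : (1 <= i <= kk)%N -> (dgcd p kk %| p i)%N.
Proof.
elim: kk => [|kk IH] /andP[h1 h2]; first by case: i h1 h2.
rewrite /dgcd big_nat_recr //=.
case: (ltngtP i kk.+1) h2 => // [hlt _|-> _]; last exact: dvdn_gcdr.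
apply: dvdn_trans (dvdn_gcdl _ _) _; apply: IH; by rewrite h1.
Qed.

Lemma coprime_prodq (t : nat) (q : nat -> nat) kk :
  (forall j, (1 <= j <= kk)%N -> coprime t (q j)) ->
  forall j, (j <= kk)%N -> coprime t (\prod_(1 <= l < j.+1) q l).
Proof.
move=> hc; elim=> [|j IH] hj; first by rewrite big_geq ?coprimen1.
rewrite big_nat_recr //= coprimeMr IH ?(ltnW hj) //= hc //.
Qed.

Lemma QQ_nz (q : nat -> nat) kk :
  (forall j, (1 <= j <= kk)%N -> (0 < q j)%N) ->
  forall j, (j <= kk)%N -> \prod_(1 <= l < j.+1) ((q l)%:R : rat) != 0.
Proof.
move=> hc; elim=> [|j IH] hj; first by rewrite big_geq ?oner_neq0.
rewrite big_nat_recr //= mulf_neq0 ?IH ?(ltnW hj) // pnatr_eq0 -lt0n hc //.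
Qed.

Lemma QQ_ratio (q : nat -> nat) j :
  forall i, (j <= i)%N ->
  \prod_(1 <= l < i.+1) ((q l)%:R : rat) / \prod_(1 <= l < j.+1) ((q l)%:R : rat)
   \is a Num.int.
Proof.
elim=> [|i IH] hj.
  by case: j hj => // _; rewrite big_geq // divr1 (natr_int _ 1).
case: (ltngtP j i.+1) hj => // [hlt _|-> _].
  rewrite big_nat_recr //= mulrAC rpredM ?natr_int ?IH //.
have [->|hz] := eqVneq (\prod_(1 <= l < i.+2) ((q l)%:R : rat)) 0.
  by rewrite mul0r (natr_int _ 0).
by rewrite divff // (natr_int _ 1).
Qed.

Lemma nu1 (L : fieldType) (nu : L -> rat) :
  (forall a b : L, a != 0 -> b != 0 -> nu (a * b) = nu a + nu b) -> nu 1 = 0.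
Proof.
move=> hm; have := hm 1 1 (oner_neq0 _) (oner_neq0 _); rewrite mulr1 => h; lra.
Qed.

Lemma nuX (L : fieldType) (nu : L -> rat) (x : L) :
  (forall a b : L, a != 0 -> b != 0 -> nu (a * b) = nu a + nu b) -> x != 0 ->
  forall m, nu (x ^+ m) = m%:R * nu x.
Proof.
move=> hm hx; elim=> [|m IH]; first by rewrite expr0 mul0r (@nu1 _ _ hm).
by rewrite exprS hm ?expf_neq0 // IH mulrSr; ring.
Qed.

Lemma alg1 (a N Q P q' tt : rat) : Q != 0 -> q' != 0 -> tt != 0 ->
  (a*N + Q^-1 * (P/q')) * (Q*q') / tt = a*q'*(N*Q/tt) + P/tt.
Proof. by move=> h1 h2 h3; field; rewrite h1 h2 h3. Qed.

Theorem theorem7p1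
  (k : closedFieldType) (hchar : [pchar k] =i pred0)
  (L : fieldType) (iota : {rmorphism k -> L}) (nu : L -> rat)
  (hnu : kvaluation iota nu)
  (S R : {pred L}) (x y u v : L)
  (hS : local_dominated_params iota nu S x y)
  (hSfrac : forall f : L, exists a b, [/\ a \in S, b \in S, b != 0 & f = a / b])
  (hR : local_dominated_params iota nu R u v)
  (hRS : {subset R <= S})
  (hx : nu x = 1)
  (t : nat) (ht : (0 < t)%N) (hu : u = x ^+ t) (hv : v = y)
  (T : nat -> L) (p q : nat -> nat) (n : nat -> nat -> nat) (lam : nat -> k)
  (kk : nat) (hkk : (0 < kk)%N)
  (hT : jumping_upto iota nu x y T p q n lam kk.+1)
  (hdiv : (t %| dgcd p kk)%N) :
  exists (n' : nat -> nat -> nat) (lam' : nat -> k),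
    jumping_upto iota nu u v (fun i => if i == 0%N then u else T i)
      (fun i => (p i %/ t)%N) q n' lam' kk.+1.
Proof.
move: hT => [[hT0 hT1 hTnz] [hpq hmu1 hrec hstep]].
move: hS => [_ _ _ [[xS yS xnz ynz] _] _].
move: hR => [_ _ _ [[uR vR unz vnz] _] _].
move: hnu => [hmul _ _ _].
have mux f : nmu nu x f = nu f by rewrite /nmu hx divr1.
have nuu : nu u = t%:R by rewrite hu (@nuX _ _ _ hmul xnz) hx mulr1.
have tnz : (t%:R : rat) != 0 by rewrite pnatr_eq0 -lt0n.
have muu f : nmu nu u f = nu f / t%:R by rewrite /nmu nuu.
have hp i : (1 <= i <= kk)%N -> (t %| p i)%N.
  by move=> hi; exact: dvdn_trans hdiv (dgcd_dvd _ _ _ hi).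
have hq i : (1 <= i <= kk)%N -> [/\ (0 < p i)%N, (0 < q i)%N & coprime (p i) (q i)].
  by move=> /andP[h1 h2]; apply: hpq; rewrite h1.
have hcop i : (1 <= i <= kk)%N -> coprime t (q i).
  by move=> hi; have [_ _ c] := hq i hi; exact: coprime_dvdl (hp i hi) c.
have hq0 i : (1 <= i <= kk)%N -> (0 < q i)%N by move=> hi; have [] := hq i hi.
have pdiv i : (1 <= i <= kk)%N -> ((p i %/ t)%N%:R : rat) = (p i)%:R / t%:R.
  by move=> hi; rewrite natr_div // ?hp // unitfE.
have C1 : forall j, (1 <= j <= kk)%N ->
    nu (T j) * \prod_(1 <= l < j.+1) ((q l)%:R : rat) / t%:R \is a Num.int.
  elim=> [//|j IH] /andP[_ hj].
  case: j IH hj => [_ hj|j IH hj].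
    rewrite big_nat1; have := hmu1; rewrite ltnS mux => -> //.
    have hq1 : (q 1)%:R != 0 :> rat by rewrite pnatr_eq0 -lt0n hq0 ?hj.
    by rewrite divfK // -pdiv ?hj // natr_int.
  have hs := hstep j.+1 isT hj; rewrite !mux in hs.
  rewrite hs (big_nat_recr j.+2) //= alg1 ?(QQ_nz _ _ hq0) ?(ltnW hj) //; last first.
    by rewrite pnatr_eq0 -lt0n hq0 ?hj.
  rewrite -pdiv; last by rewrite hj.
  apply: rpredD; last exact: natr_int.
  apply: rpredM; first by rewrite -natrM natr_int.
  by apply: IH; rewrite /= ltnW.
have F : forall i, (1 <= i <= kk)%N -> (t %| n i 0)%N.
  case=> [//|i] /andP[_ hi].
  have [_ heq _ _] := hrec i.+1 hi.
  rewrite big_ord_recl /= !mux hT0 hx mulr1 in heq.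
  rewrite (eq_bigr (fun j : 'I_i => (n i.+1 j.+1)%:R * nu (T j.+1))) in heq;
    last by move=> j _; rewrite mux.
  set SS := \sum_(j < i) _ in heq.
  have Hint : (n i.+1 0)%:R * \prod_(1 <= l < i.+1) ((q l)%:R : rat) / t%:R
      \is a Num.int.
    have -> : (n i.+1 0)%:R * \prod_(1 <= l < i.+1) ((q l)%:R : rat) / t%:R =
       nu (T i.+1) * \prod_(1 <= l < i.+2) ((q l)%:R : rat) / t%:R -
       \sum_(j < i) (n i.+1 j.+1)%:R *
          (\prod_(1 <= l < i.+1) ((q l)%:R : rat) / \prod_(1 <= l < j.+2) ((q l)%:R : rat)) *
          (nu (T j.+1) * \prod_(1 <= l < j.+2) ((q l)%:R : rat) / t%:R).
      rewrite (big_nat_recr i.+1) //=.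
      rewrite (_ : \sum_(j < i) _ = SS * \prod_(1 <= l < i.+1) ((q l)%:R : rat) / t%:R).
        rewrite (_ : nu (T i.+1) * _ / _ = (q i.+1)%:R * nu (T i.+1) * \prod_(1 <= l < i.+1) ((q l)%:R : rat) / t%:R); first by rewrite heq; ring.
        by ring.
      rewrite /SS !mulr_suml; apply: eq_bigr => j _.
      have : \prod_(1 <= l < j.+2) ((q l)%:R : rat) != 0.
        by apply: (QQ_nz _ _ hq0); have := ltn_ord j; move: hi; clear; lia.
      by move=> h; field; rewrite h tnz.
    apply: rpredB; first by apply: C1; rewrite /= hi.
    apply: rpred_sum => j _.
    apply: rpredM; last by apply: C1; have := ltn_ord j; move: hi; clear; lia.
    by apply: rpredM; [exact: natr_int | apply: QQ_ratio; have := ltn_ord j; clear; lia].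
  move: Hint; rewrite -natr_prod -natrM intrEge0 ?divr_ge0 ?ler0n //.
  move=> /natrP[m /(congr1 (fun z => z * t%:R))]; rewrite divfK // -natrM.
  move/eqP; rewrite eqr_nat => /eqP E.
  have : (t %| n i.+1 0 * \prod_(1 <= l < i.+1) q l)%N by rewrite E dvdn_mull.
  by rewrite Gauss_dvdl // (coprime_prodq _ _ kk hcop); move: hi; clear; lia.
exists (fun i j => if j == 0%N then (n i 0 %/ t)%N else n i j), lam.
split.
  split => //=; first by rewrite hT1 hv.
  by case=> [|i] //= hi; apply: hTnz.
split.
- move=> i hi; have [h1 h2 h3] := hpq i hi.
  have hpi : (t %| p i)%N by apply: hp; move: hi; clear; lia.
  split => //; first by rewrite divn_gt0 // dvdn_leq.
  by apply: coprime_dvdl h3; rewrite -{2}(divnK hpi) dvdn_mulr.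
- move=> _ /=; rewrite muu; have := hmu1; rewrite mux ltnS => -> //.
  by rewrite pdiv ?hkk // mulrAC.
- case=> [//|i] hi; have [hA hB hC hD] := hrec i.+1 hi.
  have Fi : (t %| n i.+1 0)%N by apply: F; move: hi; clear; lia.
  have hP : \prod_(j < i.+1) (if (nat_of_ord j) == 0%N then u else T j) ^+
             (if (nat_of_ord j) == 0%N then (n i.+1 0 %/ t)%N else n i.+1 j)
          = \prod_(j < i.+1) T j ^+ n i.+1 j.
    rewrite !big_ord_recl /= hT0 hu -exprM mulnC divnK //.
  rewrite /= hP; split => //; first by move=> j hj; move: (hj) => /andP[hj0 _]; rewrite eqn0Ngt hj0; exact: hA.
  rewrite !big_ord_recl /= !muu nuu divff // mulr1 natr_div ?unitfE //.
  rewrite big_ord_recl /= hT0 !mux hx mulr1 in hB.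
  have -> : \sum_(j < i) (n i.+1 (bump 0 j))%:R * nmu nu u (T (bump 0 j)) =
     (\sum_(j < i) (n i.+1 (bump 0 j))%:R * nmu nu x (T (bump 0 j))) / t%:R.
    by rewrite mulr_suml; apply: eq_bigr => j _; rewrite muu mux mulrA.
  by rewrite mulrA hB mulrDl.
- move=> [//|i] h1 h2 /=; rewrite !muu.
  have hs := hstep i.+1 h1 h2; rewrite !mux in hs.
  rewrite pdiv; last by move: h1 h2; clear; lia.
  by rewrite hs; ring.
Qed.
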